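(* Let $D$ be a normalized 2-page book drawing of $K_n$, let $D_1$ be the drawing of $K_{n-1}$ obtained by deleting vertex $n$ and its incident edges, and let $p$ be an integer with $0\le p\le\lfloor n/2\rfloor-2$. Suppose that $E_{\le k}(D,D_1)=\binom{k+2}2$ for all $0\le k\le p$. Then for each $1\le i\le p+1$, row $i$ of $M(D)$ contains exactly one entry representing a $(D,D_1)$-invariant $k$-edge for each $k$ with $i-1\le k\le p$, and no entry representing a $(D,D_1)$-invariant $j$-edge with $j\le i-2$; and every row $i$ with $i\ge p+2$ contains no entry representing a $(D,D_1)$-invariant $j$-edge with $j\le p$.
   Context: Normalized 2-page book drawing of $K_n$: vertices $(1,0),\dots,(n,0)$ labelled $1,\dots,n$; edges $i(i+1)$ on the spine; edge $1n$ in the upper half-plane; every other edge $ij$ a semicircle over $[i,j]$ in the upper or lower half-plane. $M(D)$ has entries $(i,j)$, $1\le i<j\le n$ (row $i$, column $j$), entry $(i,j)$ representing edge $ij$. In a good drawing of $K_m$, for distinct vertices $p,q,r$, $r$ is on the left (right) of $\overrightarrow{pq}$ if the triangle with edges $pq,qr,rp$ traced in order $p,q,r$ is counterclockwise (clockwise); an edge is a $k$-edge if exactly $k$ of the other $m-2$ vertices lie on one side of it, and it has a unique such index in $\{0,\dots,\lfloor m/2\rfloor-1\}$. An edge $ij$ of $D$ not incident to $n$ is a $(D,D_1)$-invariant $k$-edge if its index in $D$ is $k$ and it is also a $k$-edge in $D_1$ (exactly $k$ vertices of $D_1$ on one side). $E_{\le k}(D,D_1)$ is the number of $(D,D_1)$-invariant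 $j$-edges with $0\le j\le k$. *)

(* Defs.v *)
From mathcomp Require Import all_boot.
Set Implicit Arguments. Unset Strict Implicit. Unset Printing Implicit Defensive.

(* A normalized 2-page book drawing of K_n, vertices labelled 1..n at (1,0)..(n,0).
   Spine edges i(i+1) carry no data.  For a non-spine edge ac (a + 2 <= c),
   [up a c] is true iff the semicircle over [a,c] lies in the upper half-plane.
   Normalization (edge 1n upper) is imposed as the hypothesis [up 1 n].
   Values of [up a c] outside 1 <= a, a + 2 <= c <= n are never consulted. *)
Definition drawing := nat -> nat -> bool.

(* For a < b < c, the triangle ab, bc, ca traced a -> b -> c is counterclockwise
   iff the edge ac is in the upper page (the path a -> b -> c lies inside the
   arc ac, nested semicircles not crossing).  For a general ordered triple
   (p,q,r) of distinct vertices the orientation is that of the sorted triple if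
   (p,q,r) is a cyclic rotation of it (even permutation), and reversed otherwise. *)
Definition even_order (p q r : nat) : bool := ((p < q) + (q < r) + (r < p) == 2)%N.

Definition lo3 (p q r : nat) := minn p (minn q r).
Definition hi3 (p q r : nat) := maxn p (maxn q r).

Definition left_of (up : drawing) (p q r : nat) : bool :=
  if even_order p q r then up (lo3 p q r) (hi3 p q r)
  else ~~ up (lo3 p q r) (hi3 p q r).

Definition left_cnt (up : drawing) (m p q : nat) : nat :=
  count (fun r => (r != p) && (r != q) && left_of up p q r) (iota 1 m).
Definition right_cnt (up : drawing) (m p q : nat) : nat :=
  count (fun r => (r != p) && (r != q) && ~~ left_of up p q r) (iota 1 m).

Definition edge_index (up : drawing) (n p q : nat) : nat :=
  minn (left_cnt up n p q) (right_cnt up n p q).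

Definition invariant_edge (up : drawing) (n i j k : nat) : bool :=
  [&& 1 <= i, i < j, j < n, edge_index up n i j == k &
      (left_cnt up n.-1 i j == k) || (right_cnt up n.-1 i j == k)].

Definition E_le (up : drawing) (n k : nat) : nat :=
  \sum_(1 <= i < n) \sum_(i.+1 <= j < n)
     has (invariant_edge up n i j) (iota 0 k.+1).

(* Main.v *)
Require Import Defs.
From mathcomp Require Import all_boot zify.
Set Implicit Arguments. Unset Strict Implicit. Unset Printing Implicit Defensive.

Lemma sum_count (P : pred nat) (s : seq nat) :
  \sum_(j <- s) (P j : nat) = count P s.
Proof. by elim: s => [|x s IH]; rewrite ?big_nil ?big_cons ?IH. Qed.

Lemma sum_nat_count (P : pred nat) a b :
  \sum_(a <= j < b) (P j : nat) = count P (iota a (b - a)).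
Proof. by rewrite /index_iota sum_count. Qed.

Lemma count_in_le (T : eqType) (a b : pred T) (s : seq T) :
  {in s, forall x, a x -> b x} -> count a s <= count b s.
Proof.
elim: s => [|x s IH] //= H.
have Hs : {in s, forall x, a x -> b x} by move=> y Hy; apply: H; rewrite inE Hy orbT.
have := IH Hs; have Hx := H x (mem_head _ _).
case: (a x) Hx => /= [->|_]; case: (b x) => /=; lia.
Qed.

Lemma leq_term (F : nat -> nat) a b i0 : a <= i0 < b -> F i0 <= \sum_(a <= i < b) F i.
Proof.
move=> /andP[h1 h2].
rewrite (big_cat_nat h1 (ltnW h2)) /= (big_ltn h2) /=. lia.
Qed.

Lemma sum_tri k : \sum_(1 <= i < k.+2) (k.+2 - i) = 'C(k.+2, 2).
Proof.
elim: k => [|k IH]; first by rewrite big_nat1.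
rewrite big_nat_recr //=.
rewrite (eq_big_nat _ _ (F2 := fun i => (k.+2 - i) + 1)); last first.
  move=> i /andP[h1 h2]; clear IH; lia.
rewrite big_split /= sum_nat_const_nat IH (binS k.+2 1) bin1. lia.
Qed.

Lemma tight (c : nat -> nat) k n : k.+2 <= n ->
  \sum_(1 <= i < n) c i = 'C(k.+2, 2) ->
  (forall i, 1 <= i <= k.+1 -> k.+2 - i <= c i) ->
  (forall i, 1 <= i <= k.+1 -> c i = k.+2 - i) /\ (forall i, k.+2 <= i < n -> c i = 0).
Proof.
move=> hn hs hl.
rewrite (big_cat_nat (isT : 1 <= k.+2) hn) /= in hs.
set S1 := \sum_(1 <= i < k.+2) c i in hs.
set S2 := \sum_(k.+2 <= i < n) c i in hs.
have hS1 : S1 = \sum_(1 <= i < k.+2) (c i - (k.+2 - i)) + 'C(k.+2, 2).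
  rewrite -sum_tri -big_split /=; apply: eq_big_nat => i hi.
  have := hl i hi; lia.
have hge : 'C(k.+2, 2) <= S1 by rewrite hS1 leq_addl.
have h2 : S2 = 0 by lia.
have h1 : \sum_(1 <= i < k.+2) (c i - (k.+2 - i)) = 0 by lia.
split.
- move=> i hi; have := hl i hi.
  have : c i - (k.+2 - i) <= 0.
    rewrite -h1; apply: (leq_term (fun i => c i - (k.+2 - i))); lia.
  lia.
- move=> i hi. have : c i <= S2 by apply: leq_term. lia.
Qed.

Ltac bt := apply/idP; lia.
Ltac bf := apply/negbTE/negP => ?; lia.

Lemma lo_lt up i j r : r < i -> i < j -> left_of up i j r = up r j.
Proof.
move=> h1 h2; rewrite /left_of /even_order /lo3 /hi3.
have -> : minn i (minn j r) = r by lia.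
have -> : maxn i (maxn j r) = j by lia.
have -> : (i < j) = true by bt.
have -> : (j < r) = false by bf.
by have -> : (r < i) = true by bt.
Qed.

Lemma lo_mid up i j r : i < r -> r < j -> left_of up i j r = ~~ up i j.
Proof.
move=> h1 h2; rewrite /left_of /even_order /lo3 /hi3.
have -> : minn i (minn j r) = i by lia.
have -> : maxn i (maxn j r) = j by lia.
have -> : (i < j) = true by bt.
have -> : (j < r) = false by bf.
by have -> : (r < i) = false by bf.
Qed.

Lemma lo_gt up i j r : i < j -> j < r -> left_of up i j r = up i r.
Proof.
move=> h1 h2; rewrite /left_of /even_order /lo3 /hi3.
have -> : minn i (minn j r) = i by lia.
have -> : maxn i (maxn j r) = r by lia.
have -> : (i < j) = true by bt.
have -> : (j < r) = true by bt.
by have -> : (r < i) = false by bf.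
Qed.

Definition Ar (d : nat -> bool) a N j :=
  count (fun r => (r != j) && (if r < j then ~~ d j else d r)) (iota a N).

Lemma Ar_le d a N j : Ar d a N j <= N.
Proof. by rewrite /Ar; have := count_size (fun r => (r != j) && (if r < j then ~~ d j else d r)) (iota a N); rewrite size_iota. Qed.

Lemma Ar_S d a N j : j \in iota a N -> Ar d a N.+1 j = Ar d a N j + d (a + N).
Proof.
rewrite mem_iota => /andP[h1 h2].
rewrite /Ar -addn1 iotaD count_cat /=.
have -> : (a + N != j) = true by apply/eqP; lia.
have -> : (a + N < j) = false by apply/negbTE; rewrite -leqNgt; lia.
by rewrite /= addn0.
Qed.

Lemma Ar_top d a N : Ar d a N.+1 (a + N) = if d (a + N) then 0 else N.
Proof.
rewrite /Ar -addn1 iotaD count_cat /= eqxx /= addn0.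
rewrite (@eq_in_count _ _ (fun _ => ~~ d (a + N))); last first.
  move=> r; rewrite mem_iota => /andP[h1 h2].
  have -> : (r != a + N) = true by apply/eqP; lia.
  by have -> : (r < a + N) = true by apply/idP; lia.
case: (d (a + N)) => /=; first by rewrite count_pred0.
by rewrite addn0 count_predT size_iota.
Qed.

Lemma tour d a N t : minn t.+1 N <= count (fun j => Ar d a N j <= t) (iota a N).
Proof.
elim: N t => [|N IH] t; first by rewrite minn0.
have -> : count (fun j => Ar d a N.+1 j <= t) (iota a N.+1) =
          count (fun j => Ar d a N j + d (a + N) <= t) (iota a N) + (Ar d a N.+1 (a + N) <= t).
  have -> : iota a N.+1 = iota a N ++ [:: a + N] by rewrite -addn1 iotaD.
  rewrite count_cat /= addn0; congr (_ + _).
  by apply: eq_in_count => j hj; rewrite Ar_S.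
rewrite Ar_top.
case hd: (d (a + N)) => /=.
- case: t => [|t]; first by rewrite /=; lia.
  rewrite (@eq_count _ _ (fun j => Ar d a N j <= t)); last by move=> j; rewrite addn1 ltnS.
  have := IH t; rewrite minnSS; lia.
- rewrite (@eq_count _ _ (fun j => Ar d a N j <= t)); last by move=> j; rewrite addn0.
  case: (leqP N t) => hNt.
  + rewrite (@eq_in_count _ _ predT); last first.
      move=> j _ /=; apply/idP; have := Ar_le d a N j; lia.
    rewrite count_predT size_iota; lia.
  + have := IH t; lia.
Qed.

Lemma iota_r a N : iota a N.+1 = iota a N ++ [:: a + N].
Proof. by rewrite -addn1 iotaD. Qed.

Lemma cnt_split (T : Type) (b c : pred T) s :
  count (fun r => b r && c r) s + count (fun r => b r && ~~ c r) s = count b s.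
Proof. elim: s => [|x s IH] //=; case: (b x); case: (c x) => /=; lia. Qed.

Lemma count_ne (x : nat) s : uniq s -> x \in s -> count (fun r => r != x) s = (size s).-1.
Proof.
move=> hu hx; have := count_predC (pred1 x) s.
rewrite (@eq_count _ (predC (pred1 x)) (fun r => r != x)) //.
have := count_uniq_mem x hu; rewrite hx /= => ->; lia.
Qed.

Lemma LR up m i j : 1 <= i -> i < j -> j <= m ->
  left_cnt up m i j + right_cnt up m i j = m - 2.
Proof.
move=> h1 h2 h3; rewrite /left_cnt /right_cnt.
rewrite (cnt_split (fun r => (r != i) && (r != j)) (fun r => left_of up i j r)).
have := cnt_split (fun r => r != i) (fun r => r != j) (iota 1 m).
rewrite count_ne ?size_iota; [|exact: iota_uniq|rewrite mem_iota; apply/andP; split; lia].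
have -> : count (fun r => (r != i) && ~~ (r != j)) (iota 1 m) = 1.
  rewrite (@eq_count _ _ (pred1 j)); last first.
    move=> r /=; rewrite negbK; case: eqP => // ->; apply/eqP; lia.
  rewrite count_uniq_mem ?iota_uniq // mem_iota.
  by have -> : (1 <= j < 1 + m) = true by apply/idP; lia.
move=> /= H; lia.
Qed.

Definition sopp up m i j :=
  count (fun r => (r != i) && (r != j) && (left_of up i j r != left_of up i j m.+1)) (iota 1 m).

Lemma inv_iff up m i j t : 1 <= i -> i < j -> j <= m -> 2 * t + 2 <= m.+1 ->
  invariant_edge up m.+1 i j t = (sopp up m i j == t).
Proof.
move=> h1 h2 h3 h4.
set a := left_of up i j m.+1.
have hs : sopp up m i j = if a then right_cnt up m i j else left_cnt up m i j.
  rewrite /sopp /right_cnt /left_cnt -/a; case: a => /=.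
  - by apply: eq_count => r; case: left_of; rewrite ?andbT ?andbF.
  - by apply: eq_count => r; case: left_of; rewrite ?andbT ?andbF.
have hL : left_cnt up m.+1 i j = left_cnt up m i j + a.
  rewrite /left_cnt iota_r count_cat add1n /=.
  have -> : (m.+1 != i) = true by apply/eqP; lia.
  have -> : (m.+1 != j) = true by apply/eqP; lia.
  by rewrite /= addn0.
have hR : right_cnt up m.+1 i j = right_cnt up m i j + ~~ a.
  rewrite /right_cnt iota_r count_cat add1n /=.
  have -> : (m.+1 != i) = true by apply/eqP; lia.
  have -> : (m.+1 != j) = true by apply/eqP; lia.
  by rewrite /= addn0.
have hsum := LR up h1 h2 h3.
rewrite /invariant_edge /= /edge_index hL hR hs.
have -> : (1 <= i) = true by apply/idP; lia.
have -> : (i < j) = true by apply/idP; lia.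
have -> : (j < m.+1) = true by apply/idP; lia.
rewrite /=.
move: hsum; set L := left_cnt up m i j; set R := right_cnt up m i j.
clear hL hR hs; clearbody a; case: a => /= hsum.
- apply/idP/idP.
  + by move=> /andP[/eqP H1 /orP[/eqP H2|/eqP H2]]; apply/eqP; lia.
  + move=> /eqP H; apply/andP; split; first by apply/eqP; lia.
    by apply/orP; right; apply/eqP.
- apply/idP/idP.
  + by move=> /andP[/eqP H1 /orP[/eqP H2|/eqP H2]]; apply/eqP; lia.
  + move=> /eqP H; apply/andP; split; first by apply/eqP; lia.
    by apply/orP; left; apply/eqP.
Qed.

Lemma sopp_bound up m i j : 1 <= i -> i < j -> j <= m ->
  sopp up m i j <= i.-1 + Ar (fun r => up i r != up i m.+1) i.+1 (m - i) j.
Proof.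
move=> h1 h2 h3.
rewrite /sopp.
have -> : iota 1 m = iota 1 i.-1 ++ i :: iota i.+1 (m - i).
  have -> : m = i.-1 + (m - i).+1 by lia.
  rewrite iotaD; congr (_ ++ _).
  have -> : 1 + i.-1 = i by lia.
  by have -> : i.-1 + (m - i).+1 - i = m - i by lia.
rewrite count_cat /= eqxx /= add0n.
apply: leq_add.
  by have := count_size (fun r => (r != i) && (r != j) && (left_of up i j r != left_of up i j m.+1)) (iota 1 i.-1); rewrite size_iota.
rewrite /Ar leq_eqVlt; apply/orP; left; apply/eqP.
apply: eq_in_count => r; rewrite mem_iota => /andP[r1 r2].
have -> : (r != i) = true by apply/eqP; lia.
rewrite /= (@lo_gt up i j m.+1 h2); last lia.
case: (ltngtP r j) => hrj.
- by rewrite (@lo_mid up i j r r1 hrj); case: (up i j); case: (up i m.+1).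
- by rewrite (@lo_gt up i j r h2 hrj).
- by [].
Qed.
Unset Implicit Arguments.
Theorem lemma9 (n : nat) (up : drawing) (p : nat) :
  up 1 n ->
  p + 2 <= n./2 ->
  (forall k, k <= p -> E_le up n k = 'C(k + 2, 2)) ->
  (forall i, 1 <= i <= p.+1 ->
     (forall k, i.-1 <= k <= p ->
        count (fun j => invariant_edge up n i j k) (iota i.+1 (n - i)) = 1)
     /\ (forall t j, t + 2 <= i -> i < j <= n -> ~~ invariant_edge up n i j t))
  /\
  (forall i, p + 2 <= i ->
     forall t j, t <= p -> i < j <= n -> ~~ invariant_edge up n i j t).
Proof.
move=> _ Hp HE.
have Hn : 2 * p + 4 <= n by have := odd_double_half n; rewrite -mul2n; lia.
case: n Hp HE Hn => [|m] Hp HE Hn; first lia.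
pose c i k := count (fun j => sopp up m i j <= k) (iota i.+1 (m - i)).
have HS : forall k, k <= p -> \sum_(1 <= i < m.+1) c i k = 'C(k.+2, 2).
  move=> k hk; rewrite -addn2 -HE // /E_le; apply: eq_big_nat => i hi.
  rewrite sum_nat_count subSS /c; apply: eq_in_count => j.
  rewrite mem_iota => /andP[j1 j2].
  apply/idP/hasP.
  - move=> H; exists (sopp up m i j); first by rewrite mem_iota; lia.
    by rewrite inv_iff; [|lia|lia|lia|lia].
  - move=> [t]; rewrite mem_iota => /andP[_ ht].
    rewrite inv_iff; [|lia|lia|lia|lia] => /eqP ->; lia.
have HK : forall k i, k <= p -> 1 <= i <= k.+1 -> k.+2 - i <= c i k.
  move=> k i hk /andP[i1 i2].
  have := tour (fun r => up i r != up i m.+1) i.+1 (m - i) (k.+1 - i).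
  have -> : minn (k.+1 - i).+1 (m - i) = k.+2 - i by lia.
  move=> H; apply: (leq_trans H); apply: count_in_le => j.
  rewrite mem_iota => /andP[j1 j2] HA.
  have := sopp_bound up (i := i) (j := j) (m := m); lia.
have HT : forall k, k <= p ->
   (forall i, 1 <= i <= k.+1 -> c i k = k.+2 - i) /\ (forall i, k.+2 <= i < m.+1 -> c i k = 0).
  move=> k hk; apply: tight; [lia| exact: HS| move=> i hi; exact: HK].
have Hpos : forall i j t, t <= p -> invariant_edge up m.+1 i j t -> 0 < c i t.
  move=> i j t ht H.
  have : [&& 1 <= i, i < j & j < m.+1] by move: H; rewrite /invariant_edge => /and5P[-> -> -> _ _].
  move=> /and3P[i1 ij jm].
  rewrite inv_iff in H; [|lia|lia|lia|lia].
  rewrite /c -has_count; apply/hasP; exists j; first by rewrite mem_iota; lia.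
  by move/eqP: H => ->.
split.
- move=> i /andP[i1 i2]; split.
  + move=> k /andP[k1 k2].
    have im : i <= m by lia.
    rewrite subSn // iota_r count_cat /=.
    have -> : invariant_edge up m.+1 i (i.+1 + (m - i)) k = false.
      rewrite /invariant_edge.
      have -> : (i.+1 + (m - i) < m.+1) = false by apply/negbTE; rewrite -leqNgt; lia.
      by rewrite /= !andbF.
    rewrite addn0 (@eq_in_count _ _ (fun j => sopp up m i j == k)); last first.
      move=> j; rewrite mem_iota => /andP[j1 j2]; rewrite inv_iff //; lia.
    case: k k1 k2 => [|k] k1 k2.
    * have := (HT 0 k2).1 i; rewrite /c.
      rewrite (@eq_count _ _ (fun j => sopp up m i j == 0)); last by move=> j; rewrite leqn0.
      move=> ->; lia.
    * have := cnt_split (fun j => sopp up m i j <= k.+1) (fun j => sopp up m i j <= k) (iota i.+1 (m - i)).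
      rewrite (@eq_count _ (fun j => (sopp up m i j <= k.+1) && (sopp up m i j <= k)) (fun j => sopp up m i j <= k)); last first.
        move=> j /=; case: (leqP (sopp up m i j) k) => h /=; lia.
      rewrite (@eq_count _ (fun j => (sopp up m i j <= k.+1) && ~~ (sopp up m i j <= k)) (fun j => sopp up m i j == k.+1)); last first.
        move=> j /=; case: (leqP (sopp up m i j) k) => h /=; apply/idP/idP; try (move=> /eqP); lia.
      have h1 := (HT k.+1 k2).1 i.
      have hk : k <= p by lia.
      case: (leqP i k.+1) => hik.
      + have h2 := (HT k hk).1 i. rewrite /c in h1 h2. rewrite h1 ?h2; lia.
      + have h2 := (HT k hk).2 i. rewrite /c in h1 h2. rewrite h1 ?h2; lia.
  + move=> t j ht /andP[ij jn]; apply/negP => H.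
    have htp : t <= p by lia.
    have := Hpos i j t htp H.
    by rewrite ((HT t htp).2 i) //; apply/andP; split; lia.
- move=> i hi t j ht /andP[ij jn]; apply/negP => H.
  have := Hpos i j t ht H.
  have hpp : p <= p by [].
  have hc := (HT p hpp).2 i.
  have H2 := H; rewrite /invariant_edge in H2; case/and5P: H2 => _ _ jm _ _.
  have : c i p = 0 by apply: hc; lia.
  have : c i t <= c i p by apply: count_in_le => x _ hx; lia.
  lia.
Qed.
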